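(* Let $G$ be a connected graph of order $n\ge 3$. If $px_n(G)=2$, then $G$ is traceable (i.e. $G$ has a Hamilton path).
   Context: All graphs are finite, simple, undirected and connected. An edge-coloring of a graph assigns a color to each edge (adjacent edges may receive the same color). A tree in an edge-colored graph is proper if any two adjacent edges of the tree receive different colors. For $S\subseteq V(G)$, an $S$-tree is a subgraph of $G$ that is a tree containing all vertices of $S$. For a connected graph $G$ of order $n$ and an integer $k$ with $2\le k\le n$, an edge-coloring of $G$ is a $k$-proper coloring if for every set $S$ of $k$ vertices of $G$ there exists a proper $S$-tree in $G$. The $k$-proper index $px_k(G)$ is the minimum number of colors used in a $k$-proper coloring of $G$. *)

(* Defs.v *)
From mathcomp Require Import all_boot.
Set Implicit Arguments. Unset Strict Implicit. Unset Printing Implicit Defensive.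

Definition simple_graph (T : finType) (e : rel T) : Prop :=
  symmetric e /\ irreflexive e.

Definition connected_graph (T : finType) (e : rel T) : Prop :=
  forall x y : T, connect e x y.

(* An edge-colouring: a colour for each (unordered) edge, given as a
   symmetric function on pairs (values on non-edges are irrelevant). *)
Definition edge_coloring (T : finType) (c : T -> T -> nat) : Prop :=
  forall x y, c x y = c y x.

Definition uses_at_most (T : finType) (e : rel T) (c : T -> T -> nat) (m : nat) : Prop :=
  exists C : seq nat, size C <= m /\
    forall x y, e x y -> c x y \in C.

Definition subgraph (T : finType) (e : rel T) (A : {set T}) (f : rel T) : Prop :=
  symmetric f /\ forall x y, f x y -> [/\ e x y, x \in A & y \in A].

(* (A, f) is a tree: nonempty, connected (inside A via f), and with exactly
   #|A| - 1 (unordered) edges, i.e. 2 (#|A| - 1) ordered pairs. *)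
Definition is_tree (T : finType) (A : {set T}) (f : rel T) : Prop :=
  A != set0 /\
  (forall x y, x \in A -> y \in A -> connect f x y) /\
  #|[set p : T * T | f p.1 p.2]| = 2 * (#|A| - 1).

Definition proper_tree (T : finType) (c : T -> T -> nat) (f : rel T) : Prop :=
  forall x y z, f x y -> f x z -> y != z -> c x y != c x z.

Definition proper_S_tree (T : finType) (e : rel T) (c : T -> T -> nat)
    (S : {set T}) : Prop :=
  exists (A : {set T}) (f : rel T),
    [/\ subgraph e A f, is_tree A f, S \subset A & proper_tree c f].

Definition k_proper_coloring (T : finType) (e : rel T) (k : nat)
    (c : T -> T -> nat) : Prop :=
  edge_coloring c /\
  forall S : {set T}, #|S| = k -> proper_S_tree e c S.

Definition proper_index_eq (T : finType) (e : rel T) (k m : nat) : Prop :=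
  (exists c, k_proper_coloring e k c /\ uses_at_most e c m) /\
  (forall c m', k_proper_coloring e k c -> uses_at_most e c m' -> m <= m').

Definition traceable (T : finType) (e : rel T) : Prop :=
  exists (x : T) (p : seq T),
    [/\ path e x p, uniq (x :: p) & forall y : T, y \in x :: p].

(* Main.v *)
Require Import Defs.
From mathcomp Require Import all_boot.
From mathcomp Require Import zify.

Section H.
Variable T : finType.
Variable f : rel T.
Hypothesis fsym : symmetric f.
Hypothesis fconn : forall x y, connect f x y.
Hypothesis deg2 : forall v a b d, f v a -> f v b -> f v d ->
  a != b -> a != d -> b != d -> False.

Lemma leave (A : pred T) x q : x \in A -> last x q \notin A -> path f x q ->
  exists v w, [/\ v \in A, w \notin A & f v w].
Proof.
elim: q x => [|y q IH] x /= xA.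
  by rewrite xA.
move=> lA /andP [fxy pq].
case yA: (y \in A); first by apply: (IH y).
by exists x, y; rewrite yA xA.
Qed.

Lemma extend x p : path f x p -> uniq (x :: p) -> ~~ [forall y, y \in x :: p] ->
  exists x' p', [/\ path f x' p', uniq (x' :: p') & size p < size p'].
Proof.
move=> pp up /forallPn [y yn].
have [v [w [vP wP fvw]]] : exists v w, [/\ v \in x :: p, w \notin x :: p & f v w].
  have /connectP [q pq ly] := fconn x y.
  apply: (@leave (mem (x :: p))) pq; first by rewrite inE eqxx.
  by rewrite -ly.
case vx: (v == x).
  move/eqP: vx => vx; subst v.
  exists w, (x :: p); split => //=; first by rewrite fsym fvw pp.
  by rewrite wP.
case vl: (v == last x p).
  move/eqP: vl => vl; subst v.
  exists x, (rcons p w); split.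
  - by rewrite rcons_path pp.
  - rewrite -rcons_cons rcons_uniq wP //.
  - by rewrite size_rcons.
have vp : v \in p by move: vP; rewrite inE vx.
case/splitPr: vp pp up vl wP => p1 p2.
rewrite cat_path /= => /and3P [_ fav pp2] up.
case: p2 pp2 up => [|u p2] /=.
  by rewrite last_cat /= eqxx.
move=> /andP [fvu _] up _ wP.
exfalso.
set a := last x p1 in fav.
have aP : a \in x :: p1 by rewrite /a mem_last.
have uP : u \notin x :: p1.
  apply/negP => uin.
  have up2 : uniq ((x :: p1) ++ [:: v, u & p2]) by []. move: up2; rewrite cat_uniq => /and3P [_ /hasPn H _].
  by move: (H u); rewrite !inE eqxx orbT /= => /(_ isT); move: uin; rewrite inE => ->.
have aP2 : a \in x :: p1 ++ [:: v, u & p2].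
  move: aP; rewrite !inE mem_cat => /orP [->//|->]; by rewrite orbT.
have uP2 : u \in x :: p1 ++ [:: v, u & p2].
  by rewrite !inE mem_cat !inE eqxx !orbT.
apply: (@deg2 v a u w _ fvu fvw).
- by rewrite (fsym v a).
- by apply/eqP => E; move: uP; rewrite -E aP.
- by apply/eqP => E; move: wP; rewrite -E aP2.
- by apply/eqP => E; move: wP; rewrite -E uP2.
Qed.

Lemma ham_aux n x p : #|T| - size p <= n -> path f x p -> uniq (x :: p) ->
  exists x' p', [/\ path f x' p', uniq (x' :: p') & forall y, y \in x' :: p'].
Proof.
elim: n x p => [|n IH] x p hn pp up.
  case al: [forall y, y \in x :: p].
    by exists x, p; split => // y; move/forallP: al.
  exfalso.
  have /card_uniqP := up => /= cu.
  have : #|x :: p| < #|T|.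
    apply: proper_card; apply/properP; split; first by apply/subsetP.
    by move/forallPn: al => [y yn]; exists y.
  rewrite cu; move: hn; lia.
case al: [forall y, y \in x :: p].
  by exists x, p; split => // y; move/forallP: al.
have [x' [p' [pp' up' sz]]] := extend x p pp up (negbT al).
apply: (IH x' p') => //.
move: hn sz; lia.
Qed.

End H.

Theorem mainTheorem5 (T : finType) (e : rel T) :
  simple_graph e -> connected_graph e -> 3 <= #|T| ->
  proper_index_eq e #|T| 2 -> traceable e.
Proof.
move=> [esym eirr] _ h3 [[c [[csym Hc] [C [szC HC]]]] _].
have [A [f [[fsym fsub] [_ [fconn _]] sA pt]]] := Hc setT (cardsT T).
have allA : forall x, x \in A by move=> x; apply: (subsetP sA); rewrite inE.
have fc : forall x y, connect f x y by move=> x y; apply: fconn.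
have fe : subrel f e by move=> x y /fsub [].
have d2 : forall v a b d, f v a -> f v b -> f v d ->
    a != b -> a != d -> b != d -> False.
  move=> v a b d fa fb fd ab ad bd.
  have cab := pt _ _ _ fa fb ab.
  have cad := pt _ _ _ fa fd ad.
  have cbd := pt _ _ _ fb fd bd.
  have : uniq [:: c v a; c v b; c v d] by rewrite /= !inE negb_or cab cad cbd.
  move/uniq_leq_size => /(_ C) H.
  have : 3 <= size C.
    apply: H => z; rewrite !inE => /or3P [] /eqP ->; apply: HC; exact: fe.
  by move=> h; move: (leq_trans h szC).
case: (pickP T) => [x _|h0]; last first.
  by move: h3; rewrite (eq_card0 h0).
have [x' [p' [pp up al]]] := @ham_aux T f fsym fc d2 #|T| x [::] (leq_subr _ _) isT isT.
exists x', p'; split => //.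
exact: sub_path pp.
Qed.
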